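(* Let $\mathcal G_1,\mathcal G_2$ be classes of graphs and $m,n$ positive integers. If no graph in $\mathcal G_1$ has a $K_{2,m}$-minor and no graph in $\mathcal G_2$ has a $K_{2,n}$-minor, then no graph in $\mathcal G_1\oplus\mathcal G_2$ has a $K_{2,mn}$-minor.
   Context: Graphs are finite and simple; minors are simple minors. 2-sum: for $i=1,2$ let $G_i$ be disjoint graphs and $z_i\in V(G_i)$ incident with exactly two edges $x_iz_i,y_iz_i$; let $G_i'=G_i\setminus z_i$ if $x_iy_i\notin E(G_i)$ and $G_i'=G_i\setminus z_i\setminus x_iy_i$ otherwise. A 2-sum over $z_1,z_2$ is obtained from $G_1',G_2'$ by identifying $x_1$ with $x_2$ and $y_1$ with $y_2$ and then, if $x_iy_i\in E(G_i)$ for at least one $i$, adding an edge between the two identified vertices. This extends to summing one graph $G'$ with several graphs $G_1,\dots,G_t$ (each having a degree-two vertex $z_i$) over $t$ pairwise nonadjacent degree-two vertices $z_1',\dots,z_t'$ of $G'$, summing $G_i$ over $z_i$ with $G'$ over $z_i'$. $\mathcal G_1\oplus\mathcal G_2$ is the class of all graphs obtained by 2-summing one graph of $\mathcal G_1$ with several (any number, possibly none) graphs of $\mathcal G_2$. *)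

(* Defs.v *)
From mathcomp Require Import all_boot.
Set Implicit Arguments. Unset Strict Implicit. Unset Printing Implicit Defensive.

Record graph := Graph {
  gV :> finType;
  gadj : rel gV;
  gadj_sym : symmetric gadj;
  gadj_irr : irreflexive gadj }.

Definition gclass := graph -> Prop.

Definition hasMinor (G H : graph) : Prop :=
  exists B : H -> {set G},
    [/\ forall h, B h != set0,
        forall h1 h2, h1 != h2 -> [disjoint B h1 & B h2],
        forall h, {in B h &, forall u v,
          connect (fun a b => [&& gadj a b, a \in B h & b \in B h]) u v}
      & forall h1 h2, gadj h1 h2 ->
          exists u v, [/\ u \in B h1, v \in B h2 & gadj u v]].

Definition K2adj (m : nat) : rel ('I_2 + 'I_m)%type :=
  fun a b => match a, b with
             | inl _, inr _ | inr _, inl _ => true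
             | _, _ => false end.

Lemma K2adj_sym m : symmetric (@K2adj m).
Proof. by case=> a; case. Qed.

Lemma K2adj_irr m : irreflexive (@K2adj m).
Proof. by case. Qed.

Definition K2 (m : nat) : graph := Graph (@K2adj_sym m) (@K2adj_irr m).

Definition deg2 (G : graph) (z x y : G) : Prop :=
  x != y /\ forall v, gadj z v <-> (v = x \/ v = y).

Section TwoSum.
(** Data for summing one graph [G'] with graphs [Gs i] (i < t):
    [Gs i] is summed over its degree-two vertex [z i] (neighbours [x i], [y i])
    with [G'] over its degree-two vertex [z' i] (neighbours [x' i], [y' i]);
    [x i] is identified with [x' i] and [y i] with [y' i]. *)
Variables (G' : graph) (t : nat) (Gs : 'I_t -> graph).
Variables (z' x' y' : 'I_t -> G').
Variables (z x y : forall i, Gs i).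

Definition sumV : finType :=
  ({v : G' | v \notin [set z' i | i in 'I_t]} +
   {i : 'I_t & {v : Gs i | [&& v != z i, v != x i & v != y i]}})%type.

Definition img0 (v : G') : option sumV :=
  match insub v with Some s => Some (inl s) | None => None end.

Definition imgi (i : 'I_t) (v : Gs i) : option sumV :=
  if v == x i then img0 (x' i)
  else if v == y i then img0 (y' i)
  else match insub v with
       | Some s => Some (inr (Tagged (fun j => {v : Gs j | [&& v != z j, v != x j & v != y j]}) s))
       | None => None end.

(** This equals the 2-sum as defined
    (deleting x_i y_i and re-adding the edge between identified vertices
    if it was present in at least one summand). *)
Definition sumadj (w1 w2 : sumV) : Prop :=
  (exists a b : G', [/\ gadj a b, img0 a = Some w1 & img0 b = Some w2]) \/
  (exists i (a b : Gs i), [/\ gadj a b, imgi a = Some w1 & imgi b = Some w2]).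

Definition sum_ok : Prop :=
  [/\ forall i, deg2 (z i) (x i) (y i),
      forall i, deg2 (z' i) (x' i) (y' i)
    & forall i j, i != j -> z' i != z' j /\ ~~ gadj (z' i) (z' j)].

End TwoSum.

(** [G] belongs to [C1 (+) C2]: [G] is (isomorphic to) a 2-sum of one graph of
    [C1] with several (possibly zero) graphs of [C2]. *)
Definition twoSumClass (C1 C2 : gclass) (G : graph) : Prop :=
  exists (G' : graph) (t : nat) (Gs : 'I_t -> graph)
         (z' x' y' : 'I_t -> G') (z x y : forall i, Gs i)
         (f : G -> sumV z' z x y),
    [/\ C1 G', forall i, C2 (Gs i),
        sum_ok z' x' y' z x y,
        bijective f
      & forall u v, gadj u v <-> sumadj x' y' (f u) (f v)].

(* Main.v *)
Require Import Defs.
From mathcomp Require Import all_boot zify.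
Set Implicit Arguments. Unset Strict Implicit. Unset Printing Implicit Defensive.

Section Gen.
Variable G : graph.
Implicit Types A B S : {set G}.

Definition ind A : rel G := fun a b => [&& gadj a b, a \in A & b \in A].
Definition conn A := {in A &, forall u v, connect (ind A) u v}.
Definition adjs A B := exists u v, [/\ u \in A, v \in B & gadj u v].

Lemma ind_sym A : symmetric (ind A).
Proof. by move=> a b; rewrite /ind gadj_sym andbCA andbA andbC andbA andbC. Qed.

Lemma connect_ind_sym A u v : connect (ind A) u v = connect (ind A) v u.
Proof. exact: (sym_connect_sym (@ind_sym A)). Qed.

Lemma adjs_sym A B : adjs A B -> adjs B A.
Proof. by case=> u [v [*]]; exists v, u; split=> //; rewrite gadj_sym. Qed.

Lemma conn1 (u : G) : conn [set u].
Proof. by move=> a b; rewrite !inE => /eqP-> /eqP->; apply: connect0. Qed.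

End Gen.

Lemma connect_map (G H : graph) (S : {set G}) (T : {set H}) (g : G -> H) u v :
  {in S &, forall u v, gadj u v -> connect (ind T) (g u) (g v)} ->
  connect (ind S) u v -> connect (ind T) (g u) (g v).
Proof.
move=> hE /connectP[p pth ->]; elim: p u pth => [|a p IH] u /=.
  by move=> _; apply: connect0.
case/andP=> /and3P[uA uS aS] pth.
by apply: connect_trans (hE _ _ uS aS uA) (IH _ pth).
Qed.

Lemma conn_map (G H : graph) (S : {set G}) (T : {set H}) (g : G -> H) :
  conn S ->
  {in S &, forall u v, gadj u v -> connect (ind T) (g u) (g v)} ->
  (forall w, w \in T -> exists2 u, u \in S & connect (ind T) (g u) w) ->
  conn T.
Proof.
move=> cS hE hT w1 w2 /hT[u1 u1S c1] /hT[u2 u2S c2].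
rewrite connect_ind_sym in c1.
apply: connect_trans c1 _; apply: connect_trans c2.
exact: connect_map hE (cS _ _ u1S u2S).
Qed.

Definition K2model (G : graph) (H1 H2 : {set G}) (I : finType) (P : pred I)
  (S : I -> {set G}) :=
  [/\ [/\ H1 != set0, H2 != set0, [disjoint H1 & H2], conn H1 & conn H2],
   forall j, P j -> [/\ S j != set0, conn (S j),
       [disjoint S j & H1] /\ [disjoint S j & H2], adjs H1 (S j) & adjs H2 (S j)] &
   forall j j', P j -> P j' -> j != j' -> [disjoint S j & S j']].

Lemma K2model_swap (G : graph) H1 H2 (I : finType) (P : pred I) (S : I -> {set G}) :
  K2model H1 H2 P S -> K2model H2 H1 P S.
Proof.
case=> [[n1 n2 d c1 c2] hS hD]; split=> //; first by split=> //; rewrite disjoint_sym.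
by move=> j /hS[? ? [? ?] ? ?]; split.
Qed.

Lemma K2model_minor (G : graph) H1 H2 (I : finType) (P : pred I) (S : I -> {set G}) n :
  K2model H1 H2 P S -> n <= #|P| -> hasMinor G (K2 n).
Proof.
case=> [[n1 n2 d c1 c2] hS hD] nP.
pose e (j : 'I_n) : I := enum_val (widen_ord nP j).
have eP j : P (e j) by have := enum_valP (widen_ord nP j).
have einj : injective e.
  by move=> a b /enum_val_inj /(congr1 val) /= /val_inj.
pose B (h : K2 n) : {set G} :=
  match h with inl a => if a == ord0 then H1 else H2 | inr j => S (e j) end.
have hub (a : 'I_2) : [/\ B (inl a) != set0, conn (B (inl a)) &
     forall j, adjs (B (inl a)) (S (e j)) /\ [disjoint S (e j) & B (inl a)]].
  by rewrite /B; case: ifP=> _; split=> // j; have [? ? [? ?] ? ?] := hS _ (eP j).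
exists B; split.
- by case=> [a|j]; [case: (hub a)|case: (hS _ (eP j))].
- case=> [a|j] [b|j'] neq /=.
  + have ab : (a == ord0) != (b == ord0).
      apply: contra neq => /eqP; case: a b => [[|[|a]] ?] [[|[|b]] ?] //= _;
        by apply/eqP/val_inj.
    by case: (a == ord0) (b == ord0) ab => [] [] //= _; rewrite // disjoint_sym.
  + by case: (hub a) => _ _ /(_ j') [_]; rewrite disjoint_sym.
  + by case: (hub b) => _ _ /(_ j) [_].
  + apply: hD => //; by apply: contra neq => /eqP /einj ->.
- by case=> [a|j]; [case: (hub a)|case: (hS _ (eP j))].
- case=> [a|j] [b|j'] //= _.
  + by case: (hub a) => _ _ /(_ j') [].
  + by case: (hub b) => _ _ /(_ j) [] /adjs_sym.
Qed.

Lemma minor_K2model (G : graph) k :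
  hasMinor G (K2 k) -> exists H1 H2 (S : 'I_k -> {set G}), K2model H1 H2 predT S.
Proof.
case=> B [ne dj cn ed].
exists (B (inl ord0)), (B (inl (Ordinal (isT : 1 < 2))) ), (fun j => B (inr j)).
split; first by split; [apply: ne|apply: ne|apply: dj|apply: cn|apply: cn].
  move=> j _; split; [apply: ne|apply: cn|by split; apply: dj|by apply: ed|by apply: ed].
by move=> j j' _ _ nj; apply: dj; apply: contra nj => /eqP [->].
Qed.

Lemma edgeT (H : graph) (T : {set H}) a b :
  gadj a b -> a \in T -> b \in T -> connect (ind T) a b.
Proof. by move=> ab aT bT; apply: connect1; rewrite /ind ab aT bT. Qed.

Lemma edgeTs (H : graph) (T : {set H}) a b :
  gadj b a -> a \in T -> b \in T -> connect (ind T) a b.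
Proof. by rewrite gadj_sym; apply: edgeT. Qed.

Lemma connect_pred (G : graph) (S : {set G}) (a : pred G) u v :
  (forall u v, u \in S -> v \in S -> gadj u v -> a u -> a v) ->
  connect (ind S) u v -> a u -> a v.
Proof.
move=> st /connectP[p pth ->]; elim: p u pth => [|b p IH] u //=.
by case/andP=> /and3P[ub uS bS] pth au; apply: IH pth (st _ _ uS bS ub au).
Qed.

Lemma card_sumP (T : finType) (P : pred T) : #|P| = \sum_(j : T) (P j : nat).
Proof. rewrite -sum1_card big_mkcond /=; apply: eq_bigr => j _; rewrite unfold_in. by case: (P j). Qed.

Lemma count_main k t (outer : pred 'I_k) (ins : 'I_t -> pred 'I_k) (pe : pred 'I_t) n m :
  (forall j, ~~ outer j -> exists i, ins i j) ->
  (forall j i, outer j -> ~~ ins i j) ->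
  (forall j i i', ins i j -> ins i' j -> i = i') ->
  (forall i, pe i = [exists j, ins i j]) ->
  (forall i, #|ins i| < n) -> k = m * n -> 0 < n ->
  m <= #|outer| + #|pe|.
Proof.
move=> h1 h2 h3 hpe h4 km n0.
have per j : 1 = outer j + \sum_(i < t) (ins i j : nat).
  case: (boolP (outer j)) => oj.
    by rewrite big1 // => i _; rewrite (negbTE (h2 _ _ oj)).
  have [i0 ij] := h1 _ oj.
  rewrite (bigD1 i0) //= ij big1 // => i ni; apply/eqP; rewrite eqb0.
  by apply: contra ni => /h3 -/(_ _ ij) ->.
have E : k = #|outer| + \sum_(i < t) #|ins i|.
  rewrite card_sumP.
  rewrite (eq_bigr (fun i => \sum_j (ins i j : nat))); last by move=> i _; rewrite card_sumP.
  rewrite exchange_big /= -big_split /=.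
  by rewrite -{1}(card_ord k) -sum1_card; apply: eq_bigr => j _; rewrite -per.
have B : \sum_(i < t) #|ins i| <= #|pe| * n.-1.
  rewrite card_sumP big_distrl /=; apply: leq_sum => i _.
  rewrite hpe; case: (boolP [exists j, ins i j]) => e /=.
    by rewrite mul1n -ltnS prednK // h4.
  rewrite mul0n leqn0; apply/eqP; apply: eq_card0 => j /=.
  by apply/negP => ij; move/existsP: e; apply; exists j.
move: E B; set o := #|outer|; set p := #|pe|; set s := \sum_(i < t) _.
move=> E B; rewrite leqNgt; apply/negP => lt.
have : n.-1 * p < n * m - n.-1 * p by nia.
nia.
Qed.

Section Abs.
Variables (G G' : graph) (t : nat) (Gs : 'I_t -> graph).
Variables (z' x' y' : 'I_t -> G') (z x y : forall i, Gs i).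
Variables (inI : 'I_t -> G -> bool) (X Y : 'I_t -> G) (p0 : G -> G')
  (pI : forall i, G -> Gs i).

Implicit Types (S : {set G}) (own : bool) (u v : G) (i : 'I_t).

Definition II i := [set u | inI i u].
Definition CL i := [set u | [|| inI i u, u == X i | u == Y i]].
Definition O := [set u | [forall i, ~~ inI i u]].

Hypothesis hXO : forall i j, ~~ inI j (X i).
Hypothesis hYO : forall i j, ~~ inI j (Y i).
Hypothesis hI2 : forall i j u, inI i u -> inI j u -> i = j.
Hypothesis hsep : forall i u v, gadj u v -> inI i u -> [|| inI i v, v == X i | v == Y i].
Hypothesis h0E : forall u v, gadj u v ->
  [\/ gadj (p0 u) (p0 v), p0 u = p0 v |
      exists i, (u = X i /\ v = Y i) \/ (u = Y i /\ v = X i)].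
Hypothesis hIE : forall i u v, gadj u v ->
  [\/ gadj (pI i u) (pI i v), pI i u = pI i v |
      (u = X i /\ v = Y i) \/ (u = Y i /\ v = X i)].
Hypothesis h0z : forall i u, (p0 u == z' i) = inI i u.
Hypothesis h0inj : forall u v, u \in O -> v \in O -> p0 u = p0 v -> u = v.
Hypothesis h0X : forall i, p0 (X i) = x' i.
Hypothesis h0Y : forall i, p0 (Y i) = y' i.
Hypothesis hIX : forall i, pI i (X i) = x i.
Hypothesis hIY : forall i, pI i (Y i) = y i.
Hypothesis hIz : forall i u, (pI i u == z i) = (u \notin CL i).
Hypothesis hIinj : forall i u v, u \in CL i -> v \in CL i -> pI i u = pI i v -> u = v.
Hypothesis hz'x : forall i, gadj (z' i) (x' i).
Hypothesis hz'y : forall i, gadj (z' i) (y' i).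
Hypothesis hzx : forall i, gadj (z i) (x i).
Hypothesis hzy : forall i, gadj (z i) (y i).
Hypothesis hz'inj : forall i j, z' i = z' j -> i = j.
Hypothesis hxy : forall i, x i != y i.

Lemma XY_neq i : X i != Y i.
Proof. by apply: contra (hxy i) => /eqP e; rewrite -hIX -hIY e. Qed.

Lemma X_CL i : X i \in CL i. Proof. by rewrite inE eqxx orbT. Qed.
Lemma Y_CL i : Y i \in CL i. Proof. by rewrite inE eqxx !orbT. Qed.
Lemma X_O i : X i \in O. Proof. by rewrite inE; apply/forallP=> j; apply: hXO. Qed.
Lemma Y_O i : Y i \in O. Proof. by rewrite inE; apply/forallP=> j; apply: hYO. Qed.

Lemma notO u : u \notin O -> exists i, inI i u.
Proof. by rewrite inE negb_forall => /existsP[i]; rewrite negbK; exists i. Qed.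

Lemma inO u i : u \in O -> inI i u = false.
Proof. by rewrite inE => /forallP/(_ i)/negbTE. Qed.

Lemma sep_in S i u : conn S -> u \in S -> inI i u -> X i \notin S -> Y i \notin S ->
  S \subset II i.
Proof.
move=> cS uS iu nX nY; apply/subsetP=> v vS; rewrite inE.
apply: (connect_pred (a := inI i)) (cS _ _ uS vS) iu.
move=> a b aS bS ab ia; case/or3P: (hsep ab ia) => // /eqP e; subst b.
- by rewrite bS in nX.
- by rewrite bS in nY.
Qed.

Lemma sep_XY S i u : conn S -> u \in S -> u \in CL i -> ~~ (S \subset II i) ->
  (X i \in S) || (Y i \in S).
Proof.
move=> cS uS; rewrite inE => /or3P[iu|/eqP eu|/eqP eu];
  [|by rewrite -eu uS|by rewrite -eu uS orbT].
apply: contraR => /norP[nX nY]; exact: sep_in cS uS iu nX nY.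
Qed.

Lemma meetO S : S != set0 -> conn S -> (forall i, ~~ (S \subset II i)) ->
  exists2 u, u \in S & u \in O.
Proof.
case/set0Pn=> u uS cS nin; case: (boolP (u \in O)) => [|/notO[i iu]]; first by exists u.
have uC : u \in CL i by rewrite inE iu.
case/orP: (sep_XY cS uS uC (nin i)) => [XS|YS].
- by exists (X i) => //; apply: X_O.
- by exists (Y i) => //; apply: Y_O.
Qed.

Definition prI i (S : {set G}) (own : bool) : {set Gs i} :=
  pI i @: (S :&: CL i) :|: (if own then [set z i] else set0).

Lemma prI_mem i S own u : u \in S -> u \in CL i -> pI i u \in prI i S own.
Proof. by move=> uS uC; rewrite inE; apply/orP; left; apply: imset_f; rewrite inE uS. Qed.

Lemma prI_z i S : z i \in prI i S true.
Proof. by rewrite !inE eqxx orbT. Qed.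

Lemma prI_memP i S own w : w \in prI i S own ->
  (exists2 u, u \in S & (u \in CL i) && (w == pI i u)) \/ (own /\ w = z i).
Proof.
rewrite inE => /orP[/imsetP[u] |].
  by rewrite inE => /andP[uS uC] ->; left; exists u; rewrite ?uC ?eqxx.
by case: own; rewrite ?inE // => /eqP->; right.
Qed.

Lemma pI_XY i u : u \in CL i -> ~~ inI i u -> (pI i u = x i) \/ (pI i u = y i).
Proof. by rewrite inE => /or3P[->//|/eqP->|/eqP->] _; [left|right]. Qed.

Lemma prI_conn i S own : S != set0 -> conn S ->
  (own || ~~ ((X i \in S) && (Y i \in S))) ->
  (own -> [|| X i \in S, Y i \in S | [disjoint S & CL i]]) ->
  conn (prI i S own).
Proof.
move=> neS cS hown hown2.
pose g u := if u \in CL i then pI i u else if own then z i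
            else if X i \in S then x i else y i.
have zT : own -> z i \in prI i S own by move=> ow; rewrite ow; apply: prI_z.
have xT : X i \in S -> x i \in prI i S own.
  by move=> h; rewrite -hIX; apply: prI_mem => //; apply: X_CL.
have yT : Y i \in S -> y i \in prI i S own.
  by move=> h; rewrite -hIY; apply: prI_mem => //; apply: Y_CL.
have key : forall u v, u \in S -> v \in S -> gadj u v -> v \notin CL i ->
    connect (ind (prI i S own)) (g u) (g v).
  move=> u v uS vS uv vC; rewrite /g (negbTE vC).
  case: ifP => uC; last by apply: connect0.
  have niu : ~~ inI i u.
    apply: contra vC => iu; have := hsep uv iu; by rewrite inE.
  have uT := prI_mem own uS uC.
  case: (pI_XY uC niu) => e; rewrite e in uT *.
  - case: ifP => [ow|now].
      by apply: (edgeTs (hzx i)); [move: uT; rewrite ow | apply: prI_z].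
    case: ifP => XS; first by apply: connect0.
    move: uC; rewrite inE (negbTE niu) /= => /orP[/eqP eu|/eqP eu].
      by rewrite -eu uS in XS.
    by rewrite eu hIY in e; move: (hxy i); rewrite e eqxx.
  - case: ifP => [ow|now].
      by apply: (edgeTs (hzy i)); [move: uT; rewrite ow | apply: prI_z].
    case: ifP => XS; last by apply: connect0.
    move: uC; rewrite inE (negbTE niu) /= => /orP[/eqP eu|/eqP eu].
      by rewrite eu hIX in e; move: (hxy i); rewrite e eqxx.
    by move: hown; rewrite now XS -eu uS.
apply: (@conn_map _ _ S _ g) cS _ _.
- move=> u v uS vS uv.
  case: (boolP (v \in CL i)) => vC; last exact: key.
  case: (boolP (u \in CL i)) => uC; last first.
    by rewrite connect_ind_sym; apply: key => //; rewrite gadj_sym.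
  rewrite /g uC vC.
  case: (hIE i uv) => [a|->|[[eu ev]|[eu ev]]].
  + by apply: edgeT => //; apply: prI_mem.
  + by apply: connect0.
  + subst u v; have ow : own by move: hown; rewrite uS vS orbF.
    rewrite hIX hIY; apply: connect_trans (_ : connect _ _ (z i)) _.
      by apply: (edgeTs (hzx i)); [apply: xT|apply: zT].
    by apply: (edgeT (hzy i)); [apply: zT|apply: yT].
  + subst u v; have ow : own by move: hown; rewrite uS vS orbF.
    rewrite hIX hIY; apply: connect_trans (_ : connect _ _ (z i)) _.
      by apply: (edgeTs (hzy i)); [apply: yT|apply: zT].
    by apply: (edgeT (hzx i)); [apply: zT|apply: xT].
- move=> w /prI_memP[[u uS /andP[uC /eqP->]]|[ow ->]].
    by exists u => //; rewrite /g uC connect0.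
  case/or3P: (hown2 ow) => [XS|YS|dj].
  + exists (X i) => //; rewrite /g X_CL hIX.
    by apply: (edgeTs (hzx i)); [apply: xT|apply: zT].
  + exists (Y i) => //; rewrite /g Y_CL hIY.
    by apply: (edgeTs (hzy i)); [apply: yT|apply: zT].
  + case/set0Pn: neS => u uS; exists u => //.
    by rewrite /g (disjointFr dj uS) ow connect0.
Qed.

Lemma prI_memT i S own u : u \in S -> (u \in CL i) || own -> pI i u \in prI i S own.
Proof.
move=> uS /orP[uC|ow]; first exact: prI_mem.
case: (boolP (u \in CL i)) => uC; first exact: prI_mem.
by rewrite ow (eqP (_ : pI i u == z i)) ?prI_z // hIz.
Qed.

Lemma prI_disj i S S' own own' : [disjoint S & S'] -> ~~ (own && own') ->
  [disjoint prI i S own & prI i S' own'].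
Proof.
move=> dj no; rewrite -setI_eq0; apply/set0Pn => -[w]; rewrite inE.
case/andP=> /prI_memP[[u uS /andP[uC /eqP->]]|[ow ->]] /prI_memP[[v vS /andP[vC /eqP e]]|[ow' e]].
- by have := hIinj uC vC e => eu; subst v; rewrite (disjointFr dj uS) in vS.
- by move: (hIz i u); rewrite e eqxx uC.
- by move: (hIz i v); rewrite -e eqxx vC.
- by rewrite ow ow' in no.
Qed.

Lemma prI_adj i S S' own own' u v : [disjoint S & S'] -> ~~ (own && own') ->
  u \in S -> v \in S' -> gadj u v -> (u \in CL i) || own -> (v \in CL i) || own' ->
  (((u == X i) && (v == Y i)) || ((u == Y i) && (v == X i)) -> own || own') ->
  adjs (prI i S own) (prI i S' own').
Proof.
move=> dj no uS vS uv uo vo hp.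
have uT := prI_memT uS uo; have vT := prI_memT vS vo.
case: (hIE i uv) => [a|e|[[eu ev]|[eu ev]]].
- by exists (pI i u), (pI i v).
- by rewrite e in uT; rewrite (disjointFr (prI_disj i dj no) uT) in vT.
- subst u v; rewrite hIX in uT; rewrite hIY in vT.
  have /orP[ow|ow'] : own || own' by apply: hp; rewrite !eqxx.
    by exists (z i), (y i); rewrite hzy; move: (prI_z i S); rewrite ow.
  by exists (x i), (z i); rewrite gadj_sym hzx; move: (prI_z i S'); rewrite ow'.
- subst u v; rewrite hIY in uT; rewrite hIX in vT.
  have /orP[ow|ow'] : own || own' by apply: hp; rewrite !eqxx orbT.
    by exists (z i), (x i); rewrite hzx; move: (prI_z i S); rewrite ow.
  by exists (y i), (z i); rewrite gadj_sym hzy; move: (prI_z i S'); rewrite ow'.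
Qed.

Lemma prI_adjz i S S' own' : (X i \in S') || (Y i \in S') ->
  adjs (prI i S true) (prI i S' own').
Proof.
case/orP=> h.
  by exists (z i), (x i); rewrite hzx prI_z -hIX prI_mem // X_CL.
by exists (z i), (y i); rewrite hzy prI_z -hIY prI_mem // Y_CL.
Qed.

Lemma prI_ne i S own u : u \in S -> (u \in CL i) || own -> prI i S own != set0.
Proof. by move=> uS uo; apply/set0Pn; exists (pI i u); apply: prI_memT. Qed.

Lemma two_XY i S S' : (X i \in S) || (Y i \in S) -> (X i \in S') || (Y i \in S') ->
  [disjoint S & S'] -> ((X i \in S) && (Y i \in S')) || ((Y i \in S) && (X i \in S')).
Proof.
move=> /orP[h|h] /orP[h'|h'] dj.
- by rewrite (disjointFr dj h) in h'.
- by rewrite h h'.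
- by rewrite h h' orbT.
- by rewrite (disjointFr dj h) in h'.
Qed.

Definition piece u := [pick i | inI i u].

Lemma piece_some i u : inI i u -> piece u = Some i.
Proof.
move=> iu; rewrite /piece; case: pickP => [j ju|/(_ i)]; last by rewrite iu.
by rewrite (hI2 ju iu).
Qed.

Lemma piece_none u : u \in O -> piece u = None.
Proof. by move=> uO; rewrite /piece; case: pickP => // j; rewrite inO. Qed.

Section Model.
Variables (k : nat) (A1 A2 : {set G}) (C : 'I_k -> {set G}).
Hypothesis hmod : K2model A1 A2 predT C.

Lemma mA : [/\ A1 != set0, A2 != set0, [disjoint A1 & A2], conn A1 & conn A2].
Proof. by case: hmod. Qed.

Lemma mC j : [/\ C j != set0, conn (C j),
       [disjoint C j & A1] /\ [disjoint C j & A2], adjs A1 (C j) & adjs A2 (C j)].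
Proof. by case: hmod => _ h _; apply: h. Qed.

Lemma mD j j' : j != j' -> [disjoint C j & C j'].
Proof. by case: hmod => _ _ h; apply: h. Qed.

Definition ins i j := C j \subset II i.
Definition noins i := [forall j, ~~ ins i j].
Definition own S := [set i | noins i && (X i \in S)].
Definition pr S : {set G'} := p0 @: (S :&: O) :|: z' @: own S.

Lemma hub_meet i j H : ins i j -> conn H -> ~~ (H \subset II i) -> adjs H (C j) ->
  (X i \in H) || (Y i \in H).
Proof.
move=> ij cH nH [u [v [uH vC uv]]].
have iv : inI i v by have := subsetP ij v vC; rewrite inE.
have uCL : u \in CL i by rewrite inE; have := hsep (_ : gadj v u) iv; apply; rewrite gadj_sym.
exact: sep_XY cH uH uCL nH.
Qed.

Lemma L_hubX i : ~~ (A1 \subset II i) -> ~~ (A2 \subset II i) -> ~~ noins i ->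
  ((X i \in A1) && (Y i \in A2)) || ((Y i \in A1) && (X i \in A2)).
Proof.
move=> n1 n2; rewrite negb_forall => /existsP[j]; rewrite negbK => ij.
have [_ _ dj c1 c2] := mA; have [_ _ _ a1 a2] := mC j.
exact: two_XY (hub_meet ij c1 n1 a1) (hub_meet ij c2 n2 a2) dj.
Qed.

Lemma spoke_noins i j : ~~ (A1 \subset II i) -> ~~ (A2 \subset II i) ->
  (X i \in C j) || (Y i \in C j) -> noins i.
Proof.
move=> n1 n2 h; apply: contraT => /(L_hubX n1 n2).
have [_ _ [d1 d2] _ _] := mC j.
by case/orP=> /andP[a b]; case/orP: h => h;
  rewrite ?(disjointFr d1 h) ?(disjointFr d2 h) in a b.
Qed.

Definition good S := [/\ S != set0, conn S, forall i, ~~ (S \subset II i) &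
  forall i, X i \in S -> Y i \in S -> noins i].

Lemma p0T S u : u \in S -> u \in O -> p0 u \in pr S.
Proof. by move=> uS uO; rewrite inE; apply/orP; left; apply: imset_f; rewrite inE uS. Qed.

Lemma zT S i : noins i -> X i \in S -> z' i \in pr S.
Proof. by move=> ni XS; rewrite inE; apply/orP; right; apply: imset_f; rewrite inE ni. Qed.

Lemma pr_memP S w : w \in pr S ->
  (exists2 u, u \in S & (u \in O) && (w == p0 u)) \/
  (exists2 i, noins i && (X i \in S) & w = z' i).
Proof.
rewrite inE => /orP[/imsetP[u]|/imsetP[i]]; rewrite inE.
  by move=> /andP[uS uO] ->; left; exists u; rewrite ?uO ?eqxx.
by move=> h ->; right; exists i.
Qed.

Lemma pr_conn S : good S -> conn (pr S).
Proof.
case=> neS cS nin hXY.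
pose g u := if piece u is Some i then
   (if noins i && (X i \in S) then z' i else if X i \in S then x' i else y' i)
   else p0 u.
have key : forall u v, u \in S -> v \in S -> gadj u v -> v \in O ->
    connect (ind (pr S)) (g u) (g v).
  move=> u v uS vS uv vO; rewrite /g (piece_none vO).
  case: (boolP (u \in O)) => [uO|/notO[i iu]].
    rewrite (piece_none uO).
    case: (h0E uv) => [a|->|[i [[eu ev]|[eu ev]]]].
    + by apply: edgeT; rewrite // p0T.
    + by apply: connect0.
    + subst u v; have ni := hXY i uS vS; rewrite h0X h0Y.
      apply: connect_trans (_ : connect _ _ (z' i)) _.
        by apply: (edgeTs (hz'x i)); [rewrite -h0X p0T // X_O|apply: zT].
      by apply: (edgeT (hz'y i)); [apply: zT|rewrite -h0Y p0T // Y_O].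
    + subst u v; have ni := hXY i vS uS; rewrite h0X h0Y.
      apply: connect_trans (_ : connect _ _ (z' i)) _.
        by apply: (edgeTs (hz'y i)); [rewrite -h0Y p0T // Y_O|apply: zT].
      by apply: (edgeT (hz'x i)); [apply: zT|rewrite -h0X p0T // X_O].
  rewrite (piece_some iu).
  have vXY : (v == X i) || (v == Y i).
    by case/or3P: (hsep uv iu) => [|->|->]; rewrite ?orbT // inO.
  case: ifP => [/andP[ni XS]|nown].
    case/orP: vXY => /eqP ev; subst v.
      by rewrite h0X; apply: (edgeT (hz'x i)); [apply: zT|rewrite -h0X p0T // X_O].
    by rewrite h0Y; apply: (edgeT (hz'y i)); [apply: zT|rewrite -h0Y p0T // Y_O].
  case: ifP => XS; case/orP: vXY => /eqP ev; subst v.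
  - by rewrite h0X connect0.
  - by move: nown; rewrite (hXY i XS vS) XS.
  - by rewrite vS in XS.
  - by rewrite h0Y connect0.
apply: (@conn_map _ _ S _ g) cS _ _.
- move=> u v uS vS uv.
  case: (boolP (v \in O)) => vO; first exact: key.
  case: (boolP (u \in O)) => uO.
    by rewrite connect_ind_sym; apply: key => //; rewrite gadj_sym.
  case/notO: uO => i iu; case/notO: vO => j jv.
  have iv : inI i v.
    case/or3P: (hsep uv iu) => [//|/eqP e|/eqP e]; subst v.
    - by move: (hXO i j); rewrite jv.
    - by move: (hYO i j); rewrite jv.
  by rewrite /g (piece_some iu) (piece_some iv) connect0.
- move=> w /pr_memP[[u uS /andP[uO /eqP->]]|[i /andP[ni XS] ->]].
    by exists u => //; rewrite /g (piece_none uO) connect0.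
  exists (X i) => //; rewrite /g (piece_none (X_O i)) h0X.
  by apply: (edgeTs (hz'x i)); [rewrite -h0X p0T // X_O|apply: zT].
Qed.

Lemma pr_disj S S' : [disjoint S & S'] -> [disjoint pr S & pr S'].
Proof.
move=> dj; rewrite -setI_eq0; apply/set0Pn => -[w]; rewrite inE.
case/andP=> /pr_memP[[u uS /andP[uO /eqP->]]|[i /andP[ni XS] ->]]
            /pr_memP[[v vS /andP[vO /eqP e]]|[i' /andP[ni' XS'] e]].
- by have eu := h0inj uO vO e; subst v; rewrite (disjointFr dj uS) in vS.
- by move: (h0z i' u); rewrite e eqxx inO.
- by move: (h0z i v); rewrite -e eqxx inO.
- by have ei := hz'inj e; subst i'; rewrite (disjointFr dj XS) in XS'.
Qed.

Lemma pr_disj_z S i : ~~ noins i -> [disjoint pr S & [set z' i]].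
Proof.
move=> ni; rewrite disjoint_sym disjoints1; apply/negP.
case/pr_memP=> [[u uS /andP[uO /eqP e]]|[i' /andP[ni' _] e]].
  by move: (h0z i u); rewrite -e eqxx inO.
by have ei := hz'inj e; subst i'; rewrite ni' in ni.
Qed.

Lemma pr_ne S u : u \in S -> u \in O -> pr S != set0.
Proof. by move=> uS uO; apply/set0Pn; exists (p0 u); apply: p0T. Qed.

Lemma pr_adjXY S S' i : noins i -> X i \in S -> Y i \in S' -> adjs (pr S) (pr S').
Proof.
move=> ni XS YS'; exists (z' i), (y' i); split; first exact: zT.
  by rewrite -h0Y p0T // Y_O.
exact: hz'y.
Qed.

Lemma pr_adj S S' : good S -> good S' -> [disjoint S & S'] -> adjs S S' ->
  (forall i, (X i \in S) || (Y i \in S) -> (X i \in S') || (Y i \in S') -> noins i) ->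
  adjs (pr S) (pr S').
Proof.
move=> gS gS' dj [u [v [uS vS uv]]] hn.
case: gS gS' => [neS cS nS _] [neS' cS' nS' _].
have fin : forall i, (X i \in S) || (Y i \in S) -> (X i \in S') || (Y i \in S') ->
    adjs (pr S) (pr S').
  move=> i h h'; have ni := hn i h h'.
  case/orP: (two_XY h h' dj) => /andP[a b]; first exact: pr_adjXY ni a b.
  by apply: adjs_sym; exact: pr_adjXY ni b a.
case: (boolP (u \in O)) => [uO|/notO[i iu]]; last first.
  have vC : v \in CL i by rewrite inE; apply: hsep uv iu.
  have uC : u \in CL i by rewrite inE iu.
  exact: fin (sep_XY cS uS uC (nS i)) (sep_XY cS' vS vC (nS' i)).
case: (boolP (v \in O)) => [vO|/notO[i iv]]; last first.
  have uC : u \in CL i by rewrite inE; apply: hsep iv; rewrite gadj_sym.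
  have vC : v \in CL i by rewrite inE iv.
  exact: fin (sep_XY cS uS uC (nS i)) (sep_XY cS' vS vC (nS' i)).
case: (h0E uv) => [a|e|[i [[eu ev]|[eu ev]]]].
- by exists (p0 u), (p0 v); rewrite !p0T.
- by have eu := h0inj uO vO e; subst v; rewrite (disjointFr dj uS) in vS.
- by subst u v; apply: (fin i); rewrite ?uS ?vS ?orbT.
- by subst u v; apply: (fin i); rewrite ?uS ?vS ?orbT.
Qed.

Lemma pr_adjz S i : (X i \in S) || (Y i \in S) -> adjs (pr S) [set z' i].
Proof.
case/orP=> h.
  exists (x' i), (z' i); split; [by rewrite -h0X p0T // X_O|by rewrite set11|].
  by rewrite gadj_sym hz'x.
exists (y' i), (z' i); split; [by rewrite -h0Y p0T // Y_O|by rewrite set11|].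
by rewrite gadj_sym hz'y.
Qed.

End Model.

Lemma II_CL i u : inI i u -> u \in CL i.
Proof. by move=> iu; rewrite inE iu. Qed.

Lemma XnII i j : X j \in II i = false. Proof. by rewrite inE (negbTE (hXO _ _)). Qed.
Lemma YnII i j : Y j \in II i = false. Proof. by rewrite inE (negbTE (hYO _ _)). Qed.

Lemma edge_in i u v : gadj u v -> inI i v -> u \in CL i.
Proof. by move=> uv iv; rewrite inE; apply: hsep iv; rewrite gadj_sym. Qed.

Lemma notpair i u v : inI i u ->
  ((u == X i) && (v == Y i)) || ((u == Y i) && (v == X i)) = false.
Proof.
move=> iu; apply/negbTE; apply/norP; split; apply/nandP; left; apply/eqP=> e;
  subst u; by rewrite ?(negbTE (hXO _ _)) ?(negbTE (hYO _ _)) in iu.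
Qed.

Lemma notpair' i u v : inI i v ->
  ((u == X i) && (v == Y i)) || ((u == Y i) && (v == X i)) = false.
Proof.
move=> iv; apply/negbTE; apply/norP; split; apply/nandP; right; apply/eqP=> e;
  subst v; by rewrite ?(negbTE (hXO _ _)) ?(negbTE (hYO _ _)) in iv.
Qed.

Lemma case1 k m n H1 H2 (C : 'I_k -> {set G}) i :
  K2model H1 H2 predT C -> H1 \subset II i -> 1 < m -> k = m * n -> 0 < n ->
  hasMinor (Gs i) (K2 n).
Proof.
move=> hmod H1in m1 km n0.
have [ne1 ne2 dj c1 c2] := mA hmod.
have inH1 u : u \in H1 -> inI i u by move=> uH; have := subsetP H1in u uH; rewrite inE.
set own2 := ~~ (H2 \subset II i).
pose P := fun j => ~~ own2 || ~~ ((X i \in C j) && (Y i \in C j)).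
pose ownC j := ~~ own2 && (X i \in C j) && (Y i \in C j).
have XH1 : X i \in H1 = false by apply/negP => /inH1; rewrite (negbTE (hXO _ _)).
have H2in : ~~ own2 -> forall u, u \in H2 -> inI i u.
  by rewrite negbK => h u uH; have := subsetP h u uH; rewrite inE.
have XH2 : ~~ own2 -> X i \in H2 = false.
  by move=> h; apply/negP => /(H2in h); rewrite (negbTE (hXO _ _)).
have meetC j : exists2 v, v \in C j & v \in CL i.
  have [_ _ _ [u [v [uH vC uv]]] _] := mC hmod j.
  by exists v => //; rewrite inE; apply: hsep uv (inH1 _ uH).
apply: (@K2model_minor _ (prI i H1 false) (prI i H2 own2) _ P
          (fun j => prI i (C j) (ownC j))).
  split.
  - split.
    + by case/set0Pn: ne1 => u uH; apply: (prI_ne uH); rewrite II_CL ?inH1.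
    + case/set0Pn: ne2 => u uH; apply: (prI_ne uH).
      by case: (boolP own2) => o; rewrite ?orbT // II_CL ?(H2in o).
    + exact: prI_disj.
    + by apply: prI_conn => //; rewrite XH1.
    + apply: prI_conn => //.
        by case: (boolP own2) => o //=; rewrite XH2.
      move=> o; case: (boolP [disjoint H2 & CL i]) => d; rewrite ?orbT //.
      move: d; rewrite -setI_eq0 => /set0Pn[u]; rewrite inE => /andP[uH uC].
      by case/orP: (sep_XY c2 uH uC o) => ->; rewrite ?orbT.
  - move=> j Pj; have [neC cC [d1 d2] a1 a2] := mC hmod j.
    have [v vC vCL] := meetC j.
    split.
    + by apply: (prI_ne vC); rewrite vCL.
    + apply: prI_conn => //.
        rewrite /ownC; move: Pj; rewrite /P.
        case: (boolP own2) => o; rewrite ?o ?(negbTE o) //=.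
        by case: (X i \in C j) (Y i \in C j) => [] [].
      by rewrite /ownC => /andP[/andP[_ ->]].
    + split; apply: prI_disj => //; rewrite /ownC.
        by rewrite andbF.
      by case: (boolP own2) => o; rewrite ?o ?(negbTE o) /= ?andbF.
    + case: a1 => u [w [uH wC uw]].
      apply: (prI_adj (i := i) (own := false) (own' := ownC j) _ _ uH wC uw) => //.
      * by rewrite disjoint_sym.
      * by rewrite II_CL ?inH1.
      * by rewrite (_ : w \in CL i) // inE; apply: hsep uw (inH1 _ uH).
      * by rewrite notpair ?inH1.
    + case: (boolP own2) => o; last first.
        case: a2 => u [w [uH wC uw]].
        apply: (prI_adj (i := i) (own' := ownC j) _ _ uH wC uw) => //.
        * by rewrite disjoint_sym.
        * by rewrite II_CL ?(H2in o).
        * by rewrite (_ : w \in CL i) // inE; apply: hsep uw (H2in o _ uH).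
        * by rewrite notpair ?(H2in o).
      case: (boolP ((X i \in C j) || (Y i \in C j))) => h.
        exact: (@prI_adjz i H2 (C j) (ownC j) h).
      case/norP: h => nX nY.
      have iv : inI i v.
        by move: vCL; rewrite inE => /or3P[//|/eqP e|/eqP e]; subst v;
          [rewrite vC in nX|rewrite vC in nY].
      have Cin := sep_in cC vC iv nX nY.
      case: a2 => u [w [uH wC uw]].
      have iw : inI i w by have := subsetP Cin w wC; rewrite inE.
      apply: (prI_adj (i := i) (own' := ownC j) _ _ uH wC uw) => //.
      * by rewrite disjoint_sym.
      * by rewrite /ownC o.
      * by rewrite orbT.
      * by rewrite II_CL.
- move=> j j' _ _ nj; apply: prI_disj; first exact: (mD hmod nj).
  apply/negP => /andP[/andP[/andP[_ a] _] /andP[/andP[_ b] _]].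
  by rewrite (disjointFr (mD hmod nj) a) in b.
- case: (boolP own2) => o; last first.
    have -> : #|P| = k.
      by rewrite -[RHS]card_ord; apply: eq_card => j; rewrite /P unfold_in /= o.
    by rewrite km; nia.
  pose A := fun j => (X i \in C j) && (Y i \in C j).
  have A1 : #|A| <= 1.
    apply/card_le1_eqP => a b aA bA.
    have a1 : X i \in C a by move: aA; rewrite unfold_in /A => /andP[].
    have b1 : X i \in C b by move: bA; rewrite unfold_in /A => /andP[].
    apply/eqP; apply: contraT => nab; rewrite eq_sym in nab.
    by rewrite (disjointFr (mD hmod nab) a1) in b1.
  have eP : #|P| = #|[predC A]|.
    by apply: eq_card => j; rewrite /P !unfold_in /= o.
  have := cardC A; rewrite card_ord -eP => e.
  have : 2 * n <= m * n by rewrite leq_mul2r m1 orbT.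
  move: e A1 km m1 n0 => e A1 km m1 n0 h2. set a := #|A| in e A1. set p := #|P| in e *. lia.
Qed.

Lemma case2b k n H1 H2 (C : 'I_k -> {set G}) i :
  K2model H1 H2 predT C -> ~~ (H1 \subset II i) -> ~~ (H2 \subset II i) ->
  n <= #|ins C i| -> 0 < n -> hasMinor (Gs i) (K2 n).
Proof.
move=> hmod n1 n2 nle n0.
have [ne1 ne2 dj c1 c2] := mA hmod.
have nn : ~~ noins C i.
  have /card_gt0P[j jin] : 0 < #|ins C i| by apply: leq_trans nle.
  by move: jin; rewrite unfold_in => jin; apply/forallP => /(_ j); rewrite /ins jin.
have hx := L_hubX hmod n1 n2 nn.
have hb1 : ~~ ((X i \in H1) && (Y i \in H1)).
  by case/orP: hx => /andP[a b]; apply/nandP; [right|left];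
     rewrite ?(disjointFl dj b) ?(disjointFr dj b) // in b *; apply/negP => h;
     rewrite (disjointFr dj h) in b.
have hb2 : ~~ ((X i \in H2) && (Y i \in H2)).
  by case/orP: hx => /andP[a b]; apply/nandP; [left|right]; apply/negP => h;
     rewrite (disjointFr dj a) in h.
have m1 : (X i \in H1) || (Y i \in H1) by case/orP: hx => /andP[-> _]; rewrite ?orbT.
have m2 : (X i \in H2) || (Y i \in H2) by case/orP: hx => /andP[_ ->]; rewrite ?orbT.
have hubne (H : {set G}) : (X i \in H) || (Y i \in H) -> prI i H false != set0.
  by case/orP=> h; [apply: (prI_ne h); rewrite X_CL|apply: (prI_ne h); rewrite Y_CL].
have inC j : ins C i j -> forall u, u \in C j -> inI i u.
  by move=> ij u uC; have := subsetP ij u uC; rewrite inE.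
apply: (@K2model_minor _ (prI i H1 false) (prI i H2 false) _ (ins C i)
          (fun j => prI i (C j) false)) => //.
split.
- split; rewrite ?hubne //; [exact: prI_disj|exact: prI_conn|exact: prI_conn].
- move=> j ij; have [neC cC [d1 d2] a1 a2] := mC hmod j.
  have nX : X i \in C j = false by apply/negP => /(inC _ ij); rewrite (negbTE (hXO _ _)).
  split.
  + by case/set0Pn: neC => v vC; apply: (prI_ne vC); rewrite II_CL ?(inC _ ij).
  + by apply: prI_conn => //; rewrite nX.
  + by split; apply: prI_disj.
  + case: a1 => u [w [uH wC uw]]; have iw := inC _ ij _ wC.
    apply: (prI_adj (i := i) (own := false) (own' := false) _ _ uH wC uw) => //.
    * by rewrite disjoint_sym.
    * by rewrite (edge_in uw iw).
    * by rewrite II_CL.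
    * by rewrite notpair'.
  + case: a2 => u [w [uH wC uw]]; have iw := inC _ ij _ wC.
    apply: (prI_adj (i := i) (own := false) (own' := false) _ _ uH wC uw) => //.
    * by rewrite disjoint_sym.
    * by rewrite (edge_in uw iw).
    * by rewrite II_CL.
    * by rewrite notpair'.
- by move=> j j' _ _ nj; apply: prI_disj; first exact: (mD hmod nj).
Qed.

Lemma card_sumQ k' (outer : pred 'I_k') (pe : pred 'I_t) :
  #|(fun w : 'I_k' + 'I_t => match w with inl j => outer j | inr i => pe i end)|
  = #|outer| + #|pe|.
Proof.
rewrite !card_sumP big_sumType /=.
by congr (_ + _).
Qed.

Lemma abs_main k m n : 0 < n -> (forall i : 'I_t, 1 < m) -> k = m * n ->
  hasMinor G (K2 k) -> hasMinor G' (K2 m) \/ exists i, hasMinor (Gs i) (K2 n).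
Proof.
move=> n0 hm km /minor_K2model [H1 [H2 [C hmod]]].
case: (pickP (fun i => H1 \subset II i)) => [i h|n1].
  by right; exists i; exact: case1 hmod h (hm i) km n0.
case: (pickP (fun i => H2 \subset II i)) => [i h|n2].
  by right; exists i; exact: case1 (K2model_swap hmod) h (hm i) km n0.
have hA1 i : ~~ (H1 \subset II i) by rewrite n1.
have hA2 i : ~~ (H2 \subset II i) by rewrite n2.
case: (pickP (fun i => n <= #|ins C i|)) => [i h|n3].
  by right; exists i; exact: case2b hmod (hA1 i) (hA2 i) h n0.
left.
have [ne1 ne2 dj c1 c2] := mA hmod.
have gH1 : good C H1.
  split=> // i XH YH; apply: contraT => /(L_hubX hmod (hA1 i) (hA2 i)).
  case/orP=> /andP[_ b]; [by rewrite (disjointFr dj YH) in b|by rewrite (disjointFr dj XH) in b].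
have gH2 : good C H2.
  split=> // i XH YH; apply: contraT => /(L_hubX hmod (hA1 i) (hA2 i)).
  case/orP=> /andP[a _]; [by rewrite (disjointFr dj a) in XH|by rewrite (disjointFr dj a) in YH].
pose outer j := [forall i, ~~ ins C i j].
have gC j : outer j -> good C (C j).
  move=> oj; have [neC cC _ _ _] := mC hmod j.
  split=> //; first by move=> i; move/forallP: oj; apply.
  by move=> i XC _; apply: (spoke_noins (j := j) hmod (hA1 i) (hA2 i)); rewrite XC.
pose Q := fun w : 'I_k + 'I_t => match w with inl j => outer j | inr i => ~~ noins C i end.
pose D := fun w : 'I_k + 'I_t => match w with inl j => pr C (C j) | inr i => [set z' i] end.
have hubXY H i : good C H -> H = H1 \/ H = H2 -> ~~ noins C i -> (X i \in H) || (Y i \in H).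
  move=> _ eH /(L_hubX hmod (hA1 i) (hA2 i)).
  by case: eH => ->; case/orP=> /andP[a b]; rewrite ?a ?b ?orbT.
apply: (@K2model_minor _ (pr C H1) (pr C H2) _ Q D).
  split.
  - split.
    + by have [u uH uO] := meetO ne1 c1 hA1; apply: pr_ne uH uO.
    + by have [u uH uO] := meetO ne2 c2 hA2; apply: pr_ne uH uO.
    + exact: pr_disj.
    + exact: pr_conn.
    + exact: pr_conn.
  - case=> [j|i] /= Qw.
    + have [neC cC [d1 d2] a1 a2] := mC hmod j; have gCj := gC j Qw.
      have cond : forall i, (X i \in C j) || (Y i \in C j) -> noins C i.
        by move=> i; apply: (spoke_noins (j := j) hmod (hA1 i) (hA2 i)).
      split.
      * by have [u uH uO] := meetO neC cC (fun i => (forallP Qw) i); apply: pr_ne uH uO.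
      * exact: pr_conn.
      * by split; apply: pr_disj.
      * apply: pr_adj gH1 gCj _ a1 _; first by rewrite disjoint_sym.
        by move=> i _; apply: cond.
      * apply: pr_adj gH2 gCj _ a2 _; first by rewrite disjoint_sym.
        by move=> i _; apply: cond.
    + split.
      * by apply/set0Pn; exists (z' i); rewrite set11.
      * exact: conn1.
      * by split; rewrite disjoint_sym; apply: pr_disj_z.
      * by apply: pr_adjz; apply: (hubXY H1 i gH1) => //; left.
      * by apply: pr_adjz; apply: (hubXY H2 i gH2) => //; right.
  - case=> [j|i] [j'|i'] /= Qw Qw' nw.
    + by apply: pr_disj; apply: (mD hmod); apply: contra nw => /eqP->.
    + by apply: pr_disj_z.
    + by rewrite disjoint_sym; apply: pr_disj_z.
    + rewrite disjoints1 inE; apply: contra nw => /eqP/hz'inj ->; by [].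
rewrite card_sumQ.
apply: (@count_main k t outer (ins C) (fun i => ~~ noins C i) n m) => //.
- by move=> j; rewrite negb_forall => /existsP[i]; rewrite negbK; exists i.
- by move=> j i /forallP.
- move=> j i i' ij i'j; have [neC _ _ _ _] := mC hmod j.
  case/set0Pn: neC => v vC.
  have a : inI i v by have := subsetP ij v vC; rewrite inE.
  have b : inI i' v by have := subsetP i'j v vC; rewrite inE.
  exact: hI2 a b.
- by move=> i; rewrite /noins negb_forall; apply: eq_existsb => j; rewrite negbK.
- by move=> i; rewrite ltnNge n3.
Qed.

End Abs.

Section Inst.
Variables (G G' : graph) (t : nat) (Gs : 'I_t -> graph).
Variables (z' x' y' : 'I_t -> G') (z x y : forall i, Gs i).
Variable f : G -> sumV z' z x y.
Variable g : sumV z' z x y -> G.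
Hypothesis fK : cancel f g.
Hypothesis gK : cancel g f.
Hypothesis hok : sum_ok z' x' y' z x y.
Hypothesis hadj : forall u v, gadj u v <-> sumadj x' y' (f u) (f v).

Definition Z := [set z' i | i in 'I_t].

Lemma deg2_adj (H : graph) (a b c : H) : deg2 a b c -> [/\ gadj a b, gadj a c & b != c].
Proof. by case=> ne h; split=> //; apply/h; [left|right]. Qed.

Lemma hz'x i : gadj (z' i) (x' i). Proof. by case: hok => _ /(_ i) /deg2_adj[]. Qed.
Lemma hz'y i : gadj (z' i) (y' i). Proof. by case: hok => _ /(_ i) /deg2_adj[]. Qed.
Lemma hzx i : gadj (z i) (x i). Proof. by case: hok => /(_ i) /deg2_adj[]. Qed.
Lemma hzy i : gadj (z i) (y i). Proof. by case: hok => /(_ i) /deg2_adj[]. Qed.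
Lemma hxy i : x i != y i. Proof. by case: hok => /(_ i) /deg2_adj[]. Qed.
Lemma hx'y' i : x' i != y' i. Proof. by case: hok => _ /(_ i) /deg2_adj[]. Qed.
Lemma hz'inj i j : z' i = z' j -> i = j.
Proof.
move=> e; apply/eqP; apply: contraT => nij.
by case: hok => _ _ /(_ _ _ nij) [/eqP].
Qed.

Lemma nZ_nb (a : G') i : gadj (z' i) a -> a \notin Z.
Proof.
move=> za; apply/imsetP => -[j _ e]; subst a.
case: (eqVneq i j) => [eij|nij]; first by subst j; rewrite gadj_irr in za.
by case: hok => _ _ /(_ _ _ nij) [_]; rewrite za.
Qed.

Lemma xnZ i : x' i \notin Z. Proof. exact: nZ_nb (hz'x i). Qed.
Lemma ynZ i : y' i \notin Z. Proof. exact: nZ_nb (hz'y i). Qed.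

Definition Xv i : G := g (inl (exist _ (x' i) (xnZ i))).
Definition Yv i : G := g (inl (exist _ (y' i) (ynZ i))).

Definition inI i (u : G) : bool :=
  match f u with inl _ => false | inr p => tag p == i end.
Definition p0 (u : G) : G' :=
  match f u with inl s => val s | inr p => z' (tag p) end.


Definition Tf := fun j => {v : Gs j | [&& v != z j, v != x j & v != y j]}.

Lemma img0_some a w : img0 z' z x y a = Some w -> exists s, w = inl s /\ val s = a.
Proof. by rewrite /img0; case: insubP => [s _ e [<-]|_ //]; exists s. Qed.

Lemma img0_notZ a (h : a \notin Z) : img0 z' z x y a = Some (inl (exist _ a h)).
Proof. by rewrite /img0 insubT. Qed.

Lemma fX i : f (Xv i) = inl (exist _ (x' i) (xnZ i)). Proof. exact: gK. Qed.
Lemma fY i : f (Yv i) = inl (exist _ (y' i) (ynZ i)). Proof. exact: gK. Qed.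

Lemma img0x i : img0 z' z x y (x' i) = Some (f (Xv i)).
Proof. by rewrite (img0_notZ (xnZ i)) fX. Qed.
Lemma img0y i : img0 z' z x y (y' i) = Some (f (Yv i)).
Proof. by rewrite (img0_notZ (ynZ i)) fY. Qed.

Lemma finj : injective f. Proof. exact: can_inj fK. Qed.

Lemma imgi_spec j (a : Gs j) w : imgi z' x' y' z x y a = Some w ->
  [\/ a = x j /\ w = f (Xv j), a = y j /\ w = f (Yv j) |
      exists s : Tf j, w = inr (Tagged Tf s) /\ val s = a].
Proof.
rewrite /imgi; case: eqP => [->|nx]; first by rewrite img0x => -[<-]; constructor 1.
case: eqP => [->|ny]; first by rewrite img0y => -[<-]; constructor 2.
case: insubP => [s _ e|_] //= [<-]; constructor 3; by exists s.
Qed.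

Lemma imgi_val j (s : Tf j) : imgi z' x' y' z x y (val s) = Some (inr (Tagged Tf s)).
Proof.
have /and3P[_ nx ny] := valP s.
by rewrite /imgi (negbTE nx) (negbTE ny) valK.
Qed.

Lemma imgi_x j : imgi z' x' y' z x y (x j) = Some (f (Xv j)).
Proof. by rewrite /imgi eqxx img0x. Qed.
Lemma imgi_y j : imgi z' x' y' z x y (y j) = Some (f (Yv j)).
Proof. by rewrite /imgi eqxx eq_sym (negbTE (hxy j)) img0y. Qed.

Lemma imgi_z j : imgi z' x' y' z x y (z j) = None.
Proof.
have zx : z j != x j by apply: contraTneq (hzx j) => ->; rewrite gadj_irr.
have zy : z j != y j by apply: contraTneq (hzy j) => ->; rewrite gadj_irr.
by rewrite /imgi (negbTE zx) (negbTE zy) insubN //= eqxx.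
Qed.

Lemma Tagged_inj j (s s' : Tf j) : Tagged Tf s = Tagged Tf s' -> s = s'.
Proof. by move=> e; have := @tagged_asE _ Tf (Tagged Tf s) s'; rewrite -e tagged_asE. Qed.

Lemma imgi_inj j (a b : Gs j) w : imgi z' x' y' z x y a = Some w ->
  imgi z' x' y' z x y b = Some w -> a = b.
Proof.
case/imgi_spec=> [[-> ->]|[-> ->]|[s [-> <-]]];
  case/imgi_spec=> [[-> e]|[-> e]|[s' [e <-]]] //.
- by move/finj: e => e; move: (f_equal p0 e); rewrite /p0 fX fY /= => e';
  move: (hx'y' j); rewrite e' eqxx.
- by rewrite fX in e.
- by move/finj: e => e; move: (f_equal p0 e); rewrite /p0 fX fY /= => e';
  move: (hx'y' j); rewrite e' eqxx.
- by rewrite fY in e.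
- by rewrite fX in e.
- by rewrite fY in e.
- by case: e => /Tagged_inj ->.
Qed.

Definition pI i (u : G) : Gs i :=
  odflt (z i) [pick a | imgi z' x' y' z x y a == Some (f u)].

Lemma pI_some i u a : imgi z' x' y' z x y a = Some (f u) -> pI i u = a.
Proof.
move=> e; rewrite /pI; case: pickP => [b /eqP eb|/(_ a)]; last by rewrite e eqxx.
exact: imgi_inj eb e.
Qed.

Lemma pI_none i u : (forall a : Gs i, imgi z' x' y' z x y a != Some (f u)) -> pI i u = z i.
Proof. by move=> h; rewrite /pI; case: pickP => // b; rewrite (negbTE (h b)). Qed.

Lemma imgi_ex i u :
  (exists a : Gs i, imgi z' x' y' z x y a = Some (f u)) <-> [|| inI i u, u == Xv i | u == Yv i].
Proof.
split.
  case=> a /imgi_spec[[_ /finj ->]|[_ /finj ->]|[s [e _]]]; rewrite ?eqxx ?orbT //.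
  by rewrite /inI e /= eqxx.
case/or3P=> [|/eqP->|/eqP->]; last 2 first.
- by exists (x i); apply: imgi_x.
- by exists (y i); apply: imgi_y.
rewrite /inI; case E: (f u) => [s|[j s]] //= /eqP eji; subst j.
by exists (val s); rewrite imgi_val.
Qed.


Lemma inI_inl u s i : f u = inl s -> inI i u = false.
Proof. by rewrite /inI => ->. Qed.

Lemma inI_inr u j (s : Tf j) i : f u = inr (Tagged Tf s) -> inI i u = (j == i).
Proof. by rewrite /inI => ->. Qed.

Lemma hXO i j : ~~ inI j (Xv i). Proof. by rewrite /inI fX. Qed.
Lemma hYO i j : ~~ inI j (Yv i). Proof. by rewrite /inI fY. Qed.

Lemma hI2 i j u : inI i u -> inI j u -> i = j.
Proof. by rewrite /inI; case: (f u) => // p /eqP <- /eqP. Qed.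

Lemma hsep i u v : gadj u v -> inI i u -> [|| inI i v, v == Xv i | v == Yv i].
Proof.
move/hadj => [[a [b [ab ea eb]]] | [j [a [b [ab ea eb]]]]] iu.
  by case: (img0_some ea) => s [e _]; rewrite (inI_inl i e) in iu.
case: (imgi_spec ea) => [[_ e]|[_ e]|[s [e _]]].
- by move: iu; rewrite (finj e) (negbTE (hXO _ _)).
- by move: iu; rewrite (finj e) (negbTE (hYO _ _)).
- rewrite (inI_inr i e) in iu; move/eqP: iu => iu; subst j.
  by apply/imgi_ex; exists b.
Qed.

Lemma p0_cls j (a : Gs j) u : imgi z' x' y' z x y a = Some (f u) ->
  [\/ u = Xv j /\ p0 u = x' j, u = Yv j /\ p0 u = y' j | p0 u = z' j].
Proof.
case/imgi_spec=> [[_ /finj ->]|[_ /finj ->]|[s [e _]]].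
- by constructor 1; rewrite /p0 fX.
- by constructor 2; rewrite /p0 fY.
- by constructor 3; rewrite /p0 e.
Qed.

Lemma h0E u v : gadj u v ->
  [\/ gadj (p0 u) (p0 v), p0 u = p0 v |
      exists i, (u = Xv i /\ v = Yv i) \/ (u = Yv i /\ v = Xv i)].
Proof.
move/hadj => [[a [b [ab ea eb]]] | [j [a [b [ab ea eb]]]]].
  case: (img0_some ea) => s [e1 e2]; case: (img0_some eb) => s' [e1' e2'].
  by constructor 1; rewrite /p0 e1 e1' /= e2 e2'.
case: (p0_cls ea) => [[eu pu]|[eu pu]|pu]; case: (p0_cls eb) => [[ev pv]|[ev pv]|pv].
- by constructor 2; rewrite pu pv.
- by constructor 3; exists j; left.
- by constructor 1; rewrite pu pv gadj_sym hz'x.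
- by constructor 3; exists j; right.
- by constructor 2; rewrite pu pv.
- by constructor 1; rewrite pu pv gadj_sym hz'y.
- by constructor 1; rewrite pu pv hz'x.
- by constructor 1; rewrite pu pv hz'y.
- by constructor 2; rewrite pu pv.
Qed.

Lemma CLE i u : (u \in CL inI Xv Yv i) = [|| inI i u, u == Xv i | u == Yv i].
Proof. by rewrite inE. Qed.

Lemma hIX i : pI i (Xv i) = x i. Proof. exact: pI_some (imgi_x i). Qed.
Lemma hIY i : pI i (Yv i) = y i. Proof. exact: pI_some (imgi_y i). Qed.

Lemma hIz i u : (pI i u == z i) = (u \notin CL inI Xv Yv i).
Proof.
rewrite CLE; case: (boolP [|| _, _ | _]) => uC /=.
  have [a ea] := (imgi_ex i u).2 uC.
  rewrite (pI_some ea); apply/negP => /eqP eaz; subst a.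
  by rewrite imgi_z in ea.
rewrite pI_none ?eqxx // => a; apply/negP => /eqP ea.
by apply: (negP uC); apply/(imgi_ex i u).1; exists a.
Qed.

Lemma hIinj i u v : u \in CL inI Xv Yv i -> v \in CL inI Xv Yv i ->
  pI i u = pI i v -> u = v.
Proof.
rewrite !CLE => /(imgi_ex i u).2 [a ea] /(imgi_ex i v).2 [b eb].
rewrite (pI_some ea) (pI_some eb) => eab; subst b.
by apply: finj; rewrite ea in eb; case: eb.
Qed.

Lemma cls i u : ~~ inI i u -> [\/ u = Xv i, u = Yv i | pI i u = z i].
Proof.
move=> niu; case: (eqVneq u (Xv i)) => [->|nx]; first by constructor 1.
case: (eqVneq u (Yv i)) => [->|ny]; first by constructor 2.
by constructor 3; apply/eqP; rewrite hIz CLE (negbTE niu) (negbTE nx) (negbTE ny).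
Qed.

Lemma nonint i u v : ~~ inI i u -> ~~ inI i v ->
  [\/ gadj (pI i u) (pI i v), pI i u = pI i v |
      (u = Xv i /\ v = Yv i) \/ (u = Yv i /\ v = Xv i)].
Proof.
move=> /cls[->|->|pu] /cls[->|->|pv].
- by constructor 2.
- by constructor 3; left.
- by constructor 1; rewrite hIX pv gadj_sym hzx.
- by constructor 3; right.
- by constructor 2.
- by constructor 1; rewrite hIY pv gadj_sym hzy.
- by constructor 1; rewrite hIX pu hzx.
- by constructor 1; rewrite hIY pu hzy.
- by constructor 2; rewrite pu pv.
Qed.

Lemma notint_of j (a : Gs j) u i : imgi z' x' y' z x y a = Some (f u) -> j != i ->
  ~~ inI i u.
Proof.
move=> ea nji; case: (imgi_spec ea) => [[_ /finj ->]|[_ /finj ->]|[s [e _]]].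
- exact: hXO.
- exact: hYO.
- by rewrite (inI_inr i e).
Qed.

Lemma hIE i u v : gadj u v ->
  [\/ gadj (pI i u) (pI i v), pI i u = pI i v |
      (u = Xv i /\ v = Yv i) \/ (u = Yv i /\ v = Xv i)].
Proof.
move/hadj => [[a [b [ab ea eb]]] | [j [a [b [ab ea eb]]]]].
  case: (img0_some ea) => s [e1 _]; case: (img0_some eb) => s' [e1' _].
  by apply: nonint; [rewrite (inI_inl i e1)|rewrite (inI_inl i e1')].
case: (eqVneq j i) => [eji|nji].
  by subst j; constructor 1; rewrite (pI_some ea) (pI_some eb).
exact: nonint (notint_of ea nji) (notint_of eb nji).
Qed.

Lemma h0z i u : (p0 u == z' i) = inI i u.
Proof.
rewrite /p0 /inI; case: (f u) => [s|p].
  apply/negbTE; apply: contra (valP s) => /eqP->; exact: imset_f.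
by apply/eqP/eqP => [/hz'inj|->].
Qed.

Lemma fO w : w \in O inI -> exists s, f w = inl s.
Proof.
rewrite inE => /forallP h; case E: (f w) => [s|p]; first by exists s.
by move: (h (tag p)); rewrite /inI E eqxx.
Qed.

Lemma h0inj u v : u \in O inI -> v \in O inI -> p0 u = p0 v -> u = v.
Proof.
move=> /fO[s es] /fO[s' es']; rewrite /p0 es es' => /val_inj e; subst s'.
by apply: finj; rewrite es es'.
Qed.

Lemma h0X i : p0 (Xv i) = x' i. Proof. by rewrite /p0 fX. Qed.
Lemma h0Y i : p0 (Yv i) = y' i. Proof. by rewrite /p0 fY. Qed.

End Inst.

Lemma K21_minor (G' : graph) (a b c : G') : gadj c a -> gadj c b -> a != b ->
  hasMinor G' (K2 1).
Proof.
move=> ca cb ab.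
have nca : c != a by apply: contraTneq ca => ->; rewrite gadj_irr.
have ncb : c != b by apply: contraTneq cb => ->; rewrite gadj_irr.
apply: (@K2model_minor _ [set a] [set b] _ (predT : pred 'I_1) (fun _ => [set c])).
  split.
  - split; [by apply/set0Pn; exists a; rewrite set11|by apply/set0Pn; exists b; rewrite set11
           |by rewrite disjoints1 inE|exact: conn1|exact: conn1].
  - move=> j _; split; [|exact: conn1| | |].
    + by apply/set0Pn; exists c; rewrite set11.
    + by rewrite !disjoints1 !inE.
    + by exists a, c; rewrite !set11 gadj_sym.
    + by exists b, c; rewrite !set11 gadj_sym.
  - by move=> j j' _ _; rewrite (ord1 j) (ord1 j').
by rewrite card_sumP big_ord1.
Qed.

Theorem mainTheorem19 (C1 C2 : gclass) (m n : nat) :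
  0 < m -> 0 < n ->
  (forall G, C1 G -> ~ hasMinor G (K2 m)) ->
  (forall G, C2 G -> ~ hasMinor G (K2 n)) ->
  forall G, twoSumClass C1 C2 G -> ~ hasMinor G (K2 (m * n)).

Proof.
move=> m0 n0 h1 h2 G [G' [t [Gs [z' [x' [y' [z [x [y [f [hC1 hC2 hok [g fK gK] hadj]]]]]]]]]]].
move=> hmin.
have hm : forall i : 'I_t, 1 < m.
  move=> i; rewrite ltnNge; apply/negP => m1.
  have em : m = 1 by apply/eqP; rewrite eqn_leq m1 m0.
  apply: (h1 _ hC1); rewrite em.
  exact: (K21_minor (hz'x hok i) (hz'y hok i) (hx'y' hok i)).
have := @abs_main G G' t Gs z' x' y' z x y (inI f) (Xv g hok) (Yv g hok) (p0 f)
  (pI x' y' f).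
move=> /(_ (hXO gK hok) (hYO gK hok) (@hI2 _ _ _ _ _ _ _ _ f) (hsep fK gK hok hadj)
  (h0E fK gK hok hadj) (hIE fK gK hok hadj) (h0z f hok) (h0inj fK)
  (h0X gK hok) (h0Y gK hok) (hIX fK gK hok) (hIY fK gK hok) (hIz fK gK hok)
  (hIinj fK gK (hok := hok))
  (hz'x hok) (hz'y hok) (hzx hok) (hzy hok) (hz'inj hok) (hxy hok)).
move=> /(_ (m * n) m n n0 hm erefl hmin) [].
  exact: h1.
by case=> i; apply: h2.
Qed.
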